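(* Let $p\equiv 1\pmod 8$ be a prime, and suppose there is a primitive root $a$ of $\mathbb{F}_p^*$ such that $a(a^2-a+1)\in(\mathbb{F}_p^* )^4=\{x^4:x\in\mathbb{F}_p^*\}$. Let $K_{p+1}$ be the complete graph on vertex set $\mathbb{F}_p\cup\{c\}$, where $c\notin\mathbb{F}_p$ is an extra vertex. Regard $0$ and the nonzero squares of $\mathbb{F}_p$ as ''quadratic residues'', and $c$ and the non-squares of $\mathbb{F}_p^*$ as ''quadratic non-residues''. Then there exists a $1$-factor $F$ of $K_{p+1}$ such that (1) each edge of $F$ joins a quadratic residue and a quadratic non-residue, and (2) the lengths of the edges of $F$ are pairwise distinct.
   Context: A $1$-factor is a perfect matching. For $x\neq y$ in $\mathbb{F}_p$, the length of the edge $\{x,y\}$ is $\ell(x,y)=\{x-y,y-x\}\subset\mathbb{F}_p^*$; every edge $\{c,x\}$ with $x\in\mathbb{F}_p$ is assigned length $\infty$, distinct from all subsets of $\mathbb{F}_p^*$. ''Pairwise distinct lengths'' means no two distinct edges of $F$ have the same length. *)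

(* Defs.v *)
From HB Require Import structures.
From mathcomp Require Import all_boot all_order all_algebra.
Set Implicit Arguments. Unset Strict Implicit. Unset Printing Implicit Defensive.
Import GRing.Theory.
Local Open Scope ring_scope.

(* Vertex set of K_{p+1}: F_p together with an extra vertex c = None. *)
Definition vtx (p : nat) : finType := option 'F_p.

Definition qres (p : nat) (v : vtx p) : bool :=
  match v with
  | None => false
  | Some x => [exists y : 'F_p, y * y == x]
  end.

Definition is_edge (p : nat) (e : {set vtx p}) : bool := #|e| == 2%N.

Definition one_factor (p : nat) (F : {set {set vtx p}}) : Prop :=
  (forall e, e \in F -> is_edge e) /\
  (forall v : vtx p, #|[set e in F | v \in e]| = 1%N).

(* Length of an edge: None encodes infinity (edges through c); for an edge
   {x,y} in F_p the length is Some {x - y, y - x}. *)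
Definition edge_length (p : nat) (e : {set vtx p}) : option {set 'F_p} :=
  if None \in e then None
  else Some [set d : 'F_p | [exists x : 'F_p, exists y : 'F_p,
              [&& Some x \in e, Some y \in e, x != y & d == x - y]]].

(* Main.v *)
Require Import Defs.
From HB Require Import structures.
From mathcomp Require Import all_boot all_order all_algebra.
From mathcomp Require Import all_field zify ring.
Import GRing.Theory.

Definition sigt (r t s : nat) : nat :=
  if t < r then 4 * t + (if odd s then s.-1 else s.+1) else 4 * t + (3 - s).
Definition sg (r k : nat) : nat := sigt r (k %/ 4) (k %% 4).
Lemma divq t c : c < 4 -> (4 * t + c) %/ 4 = t.
Proof. move=> *; lia. Qed.
Lemma modq t c : c < 4 -> (4 * t + c) %% 4 = c.
Proof. move=> *; lia. Qed.

Lemma sg_prop r k : k < 8 * r ->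
  [/\ sg r k < 8 * r, sg r (sg r k) = k, sg r k != k & odd (sg r k) = ~~ odd k].
Proof.
rewrite /sg.
have hk4 := divn_eq k 4. have hs := ltn_pmod k (isT : 0 < 4).
move: (k %/ 4) (k %% 4) hk4 hs => t s -> hs hk.
have ht : t < 2 * r by lia.
rewrite /sigt.
case: (ltnP t r) => htr; case: s hs hk => [|[|[|[|s]]]] //= _ hk;
  rewrite ?subn0 ?subn1 ?subn2 ?subnn !divq ?modq // ?htr; try rewrite (ltnNge t r) htr;
   rewrite /= ?oddD ?oddM /=; (split; [lia | lia | lia | by case: (odd t)]).
Qed.
Definition ft (r e t s : nat) : nat :=
  if (t < r)%N then
    match s with 0 => 4*t + 4*r | 1 => 4*t | 2 => 4*t+2+4*r | _ => 4*t+2 end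
  else
    match s with 0 => 4*t + e + 4*r | 1 => 4*t+1+4*r | 2 => 4*t+1 | _ => 4*t+e end.
Definition fl (r e k : nat) : nat := ft r e (k %/ 4) (k %% 4).


Definition ct (r t s : nat) : nat :=
  if t < r then (match s with 0 | 1 => 0 | _ => 2 end)
  else (match s with 0 => 3 | 1 | 2 => 1 | _ => 3 end).
Definition gx (r t s : nat) : nat :=
  if t < r then (match s with 0 => t + r | 1 => t | 2 => t + r | _ => t end)
  else (match s with 0 | 1 => t + r | _ => t end).

Lemma modsplit r G1 G2 C1 C2 : 0 < r -> C1 < 4 -> C2 < 4 ->
  4 * G1 + C1 = 4 * G2 + C2 %[mod 8 * r] -> C1 = C2 /\ G1 %% (2 * r) = G2 %% (2 * r).
Proof.
move=> r0 h1 h2.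
have key : forall G C, C < 4 -> (4 * G + C) %% (8 * r) = 4 * (G %% (2 * r)) + C.
  move=> G C hC; rewrite {1}(divn_eq G (2 * r)).
  have -> : 4 * (G %/ (2 * r) * (2 * r) + G %% (2 * r)) + C
     = G %/ (2 * r) * (8 * r) + (4 * (G %% (2 * r)) + C) by lia.
  rewrite modnMDl modn_small //.
  have : G %% (2 * r) < 2 * r by rewrite ltn_pmod //; lia.
  lia.
rewrite !key // => h.
have : G1 %% (2 * r) < 2 * r by rewrite ltn_pmod //; lia.
have : G2 %% (2 * r) < 2 * r by rewrite ltn_pmod //; lia.
lia.
Qed.

Lemma mod4r r x y : 0 < r -> x < 4 * r -> y < 4 * r -> x %% (2 * r) = y %% (2 * r) ->
  x = y \/ x = y + 2 * r \/ y = x + 2 * r.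
Proof.
move=> r0 hx hy.
have red : forall z, z < 4 * r -> (z < 2 * r /\ z %% (2 * r) = z) \/
                  (2 * r <= z /\ z %% (2 * r) = z - 2 * r).
  move=> z hz; case: (ltnP z (2 * r)) => hz2.
    by left; split => //; rewrite modn_small.
  right; split => //.
  have -> : z = (z - 2 * r) + 2 * r by lia.
  rewrite modnDr modn_small; lia.
case: (red x hx) => [[? ->]|[? ->]]; case: (red y hy) => [[? ->]|[? ->]]; lia.
Qed.

Lemma ft_dec r J t s : s < 4 ->
  ft r (4 * J + 3) t s = 4 * (gx r t s + (if ct r t s == 3 then J else 0)) + ct r t s.
Proof.
rewrite /ft /gx /ct; case: (ltnP t r) => h; case: s => [|[|[|[|s]]]] //= _; lia.
Qed.

Lemma ct_lt r t s : ct r t s < 4.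
Proof. by rewrite /ct; case: (t < r); case: s => [|[|[|[|s]]]]. Qed.

Lemma gx_lt r s {t} : t < 2 * r -> gx r t s < 4 * r.
Proof. rewrite /gx; case: (ltnP t r); case: s => [|[|[|[|s]]]] /= *; lia. Qed.

Lemma f_inj r J k1 k2 : 0 < r -> k1 < 8 * r -> k2 < 8 * r ->
  fl r (4 * J + 3) k1 = fl r (4 * J + 3) k2 %[mod 8 * r] -> k1 = k2.
Proof.
move=> r0; rewrite /fl.
have := divn_eq k1 4. have := ltn_pmod k1 (isT : 0 < 4).
have := divn_eq k2 4. have := ltn_pmod k2 (isT : 0 < 4).
move: (k1 %/ 4) (k1 %% 4) (k2 %/ 4) (k2 %% 4) => t1 s1 t2 s2 hs2 -> hs1 -> hk1 hk2.
have ht1 : t1 < 2 * r by lia. have ht2 : t2 < 2 * r by lia.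
rewrite !ft_dec // => /(@modsplit r _ _ _ _ r0 (ct_lt _ _ _) (ct_lt _ _ _)) [Ceq Geq].
move: Geq; rewrite Ceq => /eqP; rewrite eqn_modDr => /eqP.
move/(@mod4r r _ _ r0 (gx_lt r s1 ht1) (gx_lt r s2 ht2)).
move: Ceq; rewrite /gx /ct.
case: (ltnP t1 r) => h1; case: (ltnP t2 r) => h2;
case: s1 hs1 {hk1} => [|[|[|[|s1]]]] // _; case: s2 hs2 {hk2} => [|[|[|[|s2]]]] // _ /=; lia.
Qed.
Local Open Scope ring_scope.
Lemma alg (F : fieldType) (b : F) (r e k : nat) : b ^+ (4 * r) = -1 -> b - 1 != 0 ->
  b ^+ 3 - 1 = (b - 1) * b ^+ e -> (k < 8 * r)%N ->
  b ^+ k - b ^+ (sg r k) = (b - 1) * b ^+ (fl r e k).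
Proof.
move=> hM hu hE _.
have hE' : b ^+ e = (b^+3 - 1) / (b - 1) by rewrite hE [_ * b ^+ e]mulrC mulfK.
rewrite /sg /fl.
have hk4 := divn_eq k 4. have hs := ltn_pmod k (isT : (0 < 4)%N).
move: (k %/ 4)%N (k %% 4)%N hk4 hs => t s -> hs.
have -> : (t * 4 = 4 * t)%N by rewrite mulnC.
rewrite /sigt /ft.
case: (ltnP t r) => htr; case: s hs => [|[|[|[|s]]]] //= _;
  move: (4 * t)%N (4 * r)%N hM => T R hM;
  rewrite ?subn0 ?subn1 ?subn2 ?subnn ?addn0 !exprD ?hM ?hE' ?expr0; field; done.
Qed.

Lemma match_lemma (T : finType) (pi : T -> T) : involutive pi -> (forall v, pi v != v) ->
  (forall e, e \in [set [set v; pi v] | v : T] -> #|e| == 2%N) /\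
  (forall v, #|[set e in [set [set v; pi v] | v : T] | v \in e]| = 1%N).
Proof.
move=> hinv hfix; split.
  move=> e /imsetP [v _ ->]; by rewrite cards2 (eq_sym v) hfix.
move=> v; apply/eqP/cards1P; exists [set v; pi v]; apply/setP => e.
rewrite !inE; apply/andP/eqP.
  case=> /imsetP [w _ ->] /set2P [->|->] //.
  by rewrite hinv setUC.
move=> ->; split; first by apply/imsetP; exists v.
by rewrite !inE eqxx.
Qed.

Lemma edge_length_some (p : nat) (x y : 'F_p) : x != y ->
  edge_length [set Some x; Some y] = Some [set x - y; y - x].
Proof.
move=> hxy; rewrite /edge_length !inE /=.
congr Some; apply/setP => d; rewrite !inE; apply/existsP/orP.
  case=> x' /existsP [y' /and4P [hx' hy' hne /eqP ->]].
  move: hx' hy' hne; rewrite !inE !(inj_eq (@Some_inj _)).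
  by case/orP=> /eqP -> /orP [] /eqP ->; rewrite ?eqxx //= => _; [left|right].
case=> /eqP ->.
  by exists x; apply/existsP; exists y; rewrite !inE !eqxx /= orbT andbT.
by exists y; apply/existsP; exists x; rewrite !inE !eqxx /= orbT andbT eq_sym.
Qed.

Definition lg {p : nat} (r : nat) (b : 'F_p) (y : 'F_p) : nat :=
  if [pick i : 'I_(8*r) | b ^+ i == y] is Some i then nat_of_ord i else 0%N.

Lemma pow_inj {p r : nat} {b : 'F_p} (hb : (8*r).-primitive_root b) i j :
  (i < 8 * r)%N -> (j < 8 * r)%N -> b ^+ i = b ^+ j -> i = j.
Proof.
move=> hi hj /eqP; rewrite (eq_prim_root_expr hb) !modn_small //; exact/eqP.
Qed.

Lemma b_neq0 {p r : nat} {b : 'F_p} (hb : (8*r).-primitive_root b) k : b ^+ k != 0.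
Proof.
apply: expf_neq0; apply/eqP => b0.
have := prim_expr_order hb; rewrite b0 expr0n.
have := prim_order_gt0 hb; case: (8 * r)%N => // n _ /eqP; rewrite eq_sym oner_eq0.
Qed.

Lemma lg_spec {p r : nat} {b : 'F_p} (hb : (8*r).-primitive_root b)
  (hfer : forall y : 'F_p, y != 0 -> y ^+ (8 * r) = 1) y :
  y != 0 -> (lg r b y < 8 * r)%N /\ b ^+ (lg r b y) = y.
Proof.
move=> y0; rewrite /lg; case: pickP => [i /eqP -> //|].
have [i ->] := prim_rootP hb (hfer y y0).
by move/(_ i); rewrite eqxx.
Qed.

Lemma lg_exp {p r : nat} {b : 'F_p} (hb : (8*r).-primitive_root b)
  (hfer : forall y : 'F_p, y != 0 -> y ^+ (8 * r) = 1) k :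
  (k < 8 * r)%N -> lg r b (b ^+ k) = k.
Proof.
move=> hk; have [h1 h2] := lg_spec hb hfer _ (b_neq0 hb k).
exact: pow_inj hb _ _ h1 hk h2.
Qed.

Lemma qres_exp {p r : nat} {b : 'F_p} (hb : (8*r).-primitive_root b)
  (hfer : forall y : 'F_p, y != 0 -> y ^+ (8 * r) = 1) k :
  (k < 8 * r)%N -> qres (Some (b ^+ k)) = ~~ odd k.
Proof.
move=> hk /=; case hodd: (odd k) => /=.
  apply/negbTE/negP => /existsP [z /eqP hz].
  have z0 : z != 0 by apply: contraTneq (b_neq0 hb k) => z0; rewrite -hz z0 mul0r eqxx.
  have [hl hl2] := lg_spec hb hfer _ z0.
  move: hz; rewrite -hl2 -exprD => /eqP; rewrite (eq_prim_root_expr hb) => /eqP hm.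
  have := congr1 (modn^~ 2%N) hm; rewrite /= !modn_dvdm ?(dvdn_mulr r (isT : (2 %| 8)%N)) //.
  by rewrite !modn2 addnn odd_double hodd.
apply/existsP; exists (b ^+ k./2); rewrite -exprD addnn.
by move: (odd_double_half k); rewrite hodd add0n => ->.
Qed.

Definition pf {p : nat} (r : nat) (b : 'F_p) (y : 'F_p) : 'F_p := b ^+ (sg r (lg r b y)).
Definition part {p : nat} (r : nat) (b : 'F_p) (v : vtx p) : vtx p :=
  match v with None => Some 0 | Some y => if y == 0 then None else Some (pf r b y) end.

Lemma pf_spec {p r : nat} {b : 'F_p} (hb : (8*r).-primitive_root b)
  (hfer : forall y : 'F_p, y != 0 -> y ^+ (8 * r) = 1) y : y != 0 ->
  [/\ pf r b y != 0, pf r b (pf r b y) = y, pf r b y != y &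
      qres (Some (pf r b y)) = ~~ qres (Some y)].
Proof.
move=> y0; have [hk hy] := lg_spec hb hfer _ y0.
have [s1 s2 s3 s4] := sg_prop _ _ hk.
split.
- exact: b_neq0 hb _.
- by rewrite /pf (lg_exp hb hfer _ s1) s2.
- apply/eqP; rewrite /pf -{2}hy => /(pow_inj hb _ _ s1 hk) e.
  by move: s3; rewrite e eqxx.
- by rewrite /pf (qres_exp hb hfer _ s1) -{2}hy (qres_exp hb hfer _ hk) s4.
Qed.

Lemma part_props {p r : nat} {b : 'F_p} (hb : (8*r).-primitive_root b)
  (hfer : forall y : 'F_p, y != 0 -> y ^+ (8 * r) = 1) :
  [/\ involutive (part r b), forall v, part r b v != v &
      forall v, qres (part r b v) = ~~ qres v].
Proof.
have q0 : qres (Some (0 : 'F_p)) = true by apply/existsP; exists 0; rewrite mul0r.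
split.
- case=> [y|] /=; last by [].
  idtac.
  case: (y =P 0) => [-> //|/eqP y0] /=.
  have [h1 h2 _ _] := pf_spec hb hfer _ y0.
  by rewrite (negbTE h1) h2.
- case=> [y|] //=; case: (y =P 0) => [//|/eqP y0].
  have [_ _ h3 _] := pf_spec hb hfer _ y0.
  by rewrite (inj_eq (@Some_inj _)).
- case=> [y|]; last by rewrite q0.
  rewrite /part; case: (y =P 0) => [->|/eqP y0]; first by rewrite q0.
  by have [_ _ _ ->] := pf_spec hb hfer _ y0.
Qed.

Lemma dinj {p r : nat} {b : 'F_p} (hb : (8*r).-primitive_root b)
  (hfer : forall y : 'F_p, y != 0 -> y ^+ (8 * r) = 1) (r0 : (0 < r)%N) (J : nat)
  (hM : b ^+ (4 * r) = -1) (hu : b - 1 != 0)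
  (hE : b ^+ 3 - 1 = (b - 1) * b ^+ (4 * J + 3)) y1 y2 :
  y1 != 0 -> y2 != 0 -> y1 - pf r b y1 = y2 - pf r b y2 -> y1 = y2.
Proof.
have D : forall y, y != 0 -> y - pf r b y = (b - 1) * b ^+ (fl r (4 * J + 3) (lg r b y)).
  move=> y y0; have [hk hy] := lg_spec hb hfer _ y0.
  by rewrite /pf -{1}hy; apply: alg.
move=> h1 h2; rewrite (D _ h1) (D _ h2) => /(mulfI hu) /eqP.
rewrite (eq_prim_root_expr hb) => /eqP.
have [k1 hy1] := lg_spec hb hfer _ h1; have [k2 hy2] := lg_spec hb hfer _ h2.
move/(f_inj r J _ _ r0 k1 k2) => e.
by rewrite -hy1 -hy2 e.
Qed.

Lemma edge_cases {p r : nat} {b : 'F_p} (hb : (8*r).-primitive_root b)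
  (hfer : forall y : 'F_p, y != 0 -> y ^+ (8 * r) = 1) (v : vtx p) :
  [set v; part r b v] = [set None; Some 0] \/
  exists2 y, y != 0 & [set v; part r b v] = [set Some y; Some (pf r b y)].
Proof.
case: v => [y|]; last by left.
rewrite /part; case: (y =P 0) => [->|/eqP y0]; first by left; rewrite setUC.
by right; exists y.
Qed.

Theorem proposition2p1 (p : nat) (hp : prime p) (hp8 : (p %% 8 = 1)%N)
  (a : 'F_p) (ha : (p.-1).-primitive_root a)
  (h4 : exists x : 'F_p, x != 0 /\ a * (a ^+ 2 - a + 1) = x ^+ 4) :
  exists F : {set {set vtx p}},
    one_factor F /\
    (forall e, e \in F -> exists u v, [/\ u \in e, v \in e, qres u & ~~ qres v]) /\
    {in F &, injective (@edge_length p)}.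
Proof.
have p1 : p = (8 * (p %/ 8)).+1 by move: (divn_eq p 8); lia.
have r0 : (0 < p %/ 8)%N by move: (prime_gt1 hp); lia.
move: (p %/ 8)%N p1 r0 => r p1 r0.
have hn : p.-1 = (8 * r)%N by rewrite p1.
rewrite hn in ha.
have hMa : a ^+ (4 * r) = -1.
  have : (a ^+ (4 * r)) ^+ 2 == 1.
    by rewrite -exprM (_ : (4 * r * 2 = 8 * r)%N) ?(prim_expr_order ha) //; lia.
  rewrite sqrf_eq1 => /orP [|/eqP //].
  have m4 : ((4 * r) %% (8 * r) = 4 * r)%N by rewrite modn_small //; lia.
  rewrite -{1}(expr0 a) (eq_prim_root_expr ha) mod0n m4 => /eqP; lia.
have hbA : - a = a ^+ (4 * r).+1 by rewrite exprSr hMa mulN1r.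
have hb : (8 * r).-primitive_root (- a).
  rewrite hbA prim_root_exp_coprime //.
  rewrite (_ : (8 * r = 2 * (4 * r))%N); last by lia.
  by rewrite coprimeMr coprimen2 coprimeSn andbT /= oddM.
have hfer : forall y : 'F_p, y != 0 -> y ^+ (8 * r) = 1.
  move=> y y0; have cp : #|'F_p| = (8 * r).+1 by rewrite card_Fp.
  have := expf_card y; rewrite cp exprS => h.
  by apply: (mulfI y0); rewrite h mulr1.
have hMb : (- a) ^+ (4 * r) = -1.
  by rewrite exprNn hMa -signr_odd oddM andFb expr0 mul1r.
have hu : - a - 1 != 0.
  rewrite subr_eq0; apply/eqP => h1.
  have := pow_inj hb 1 0; rewrite expr1 expr0 => /(_ _ _ h1).
  by move=> /(_ _ _) H; have := H ltac:(lia) ltac:(lia).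
have hb0 : - a != 0 by have := b_neq0 hb 1; rewrite expr1.
have ha0 : a != 0 by rewrite -oppr_eq0.
case: h4 => x [x0 hx].
set w := a ^+ r * x.
have w0 : w != 0 by rewrite mulf_neq0 // expf_neq0.
have hw : (- a) * ((- a) ^+ 2 + (- a) + 1) = w ^+ 4.
  have -> : w ^+ 4 = - (x ^+ 4) by rewrite exprMn -exprM mulnC hMa mulN1r.
  rewrite -hx; ring.
have [hj hjw] := lg_spec hb hfer _ w0.
move: (lg r (- a) w) hj hjw => j hj hjw.
set J := (j + 2 * r - 1)%N.
have hE : (- a) ^+ 3 - 1 = (- a - 1) * (- a) ^+ (4 * J + 3).
  have he1 : (- a) ^+ (4 * J + 3).+1 = w ^+ 4.
    rewrite (_ : ((4 * J + 3).+1 = j * 4 + 8 * r)%N); last by rewrite /J; lia.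
    by rewrite exprD (prim_expr_order hb) mulr1 exprM hjw.
  apply: (mulfI hb0).
  transitivity ((- a - 1) * ((- a) * ((- a) ^+ 2 + (- a) + 1))); first ring.
  by rewrite hw -he1 exprS; ring.
have [Pinv Pfix Pq] := part_props hb hfer.
have [M1 M2] := match_lemma _ _ Pinv Pfix.
exists [set [set v; part r (- a) v] | v : vtx p].
split; first by split.
split.
  move=> e /imsetP [v _ ->].
  case hq: (qres v).
    by exists v, (part r (- a) v); rewrite !inE !eqxx orbT Pq hq.
  by exists (part r (- a) v), v; rewrite !inE !eqxx orbT Pq hq.
have L0 : edge_length [set (None : vtx p); Some 0] = None by rewrite /edge_length !inE eqxx.
have L1 : forall y, y != 0 -> edge_length [set (Some y : vtx p); Some (pf r (- a) y)]
    = Some [set y - pf r (- a) y; pf r (- a) y - y].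
  move=> y y0; apply: edge_length_some.
  by have [_ _ h _] := pf_spec hb hfer _ y0; rewrite eq_sym.
move=> e1 e2 /imsetP [v1 _ ->] /imsetP [v2 _ ->].
case: (edge_cases hb hfer v1) => [->|[y1 y10 ->]];
case: (edge_cases hb hfer v2) => [->|[y2 y20 ->]] //.
- by rewrite L0 L1.
- by rewrite L0 L1.
rewrite !L1 // => -[E].
have : y1 - pf r (- a) y1 \in [set y2 - pf r (- a) y2; pf r (- a) y2 - y2].
  by rewrite -E !inE eqxx.
have [n1 n2 _ _] := pf_spec hb hfer _ y20.
case/set2P => [/eqP|/eqP] H.
  by rewrite (dinj hb hfer r0 _ hMb hu hE _ _ y10 y20 (eqP H)).
rewrite -{2}n2 in H.
by rewrite (dinj hb hfer r0 _ hMb hu hE _ _ y10 n1 (eqP H)) n2 setUC.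
Qed.
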